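(* Let $\mathit{VI}$ be a finite set of variables with $\#\mathit{VI}=n$ and $k\in\mathbb{N}$ with $1\le k\le n$. Then the set of meet-irreducible elements of the lattice $\mathit{TSD}_k$ is $\mathrm{MI}(\mathit{TSD}_k)=\{\mathit{SG}\}\cup\mathrm{dAtoms}(\mathit{TSD}_k)\cup M_k$, where $\mathrm{dAtoms}(\mathit{TSD}_k)=\{\mathit{SG}\setminus\{S\}\mid S\in\mathit{SG},\ \#S\le k\}$ and $M_k=\{\,\mathit{SG}\setminus\{U\in\mathit{SG}\mid T\subseteq U\subseteq S\}\mid T,S\in\mathit{SG},\ T\subsetneq S,\ \#T=k\,\}$.
   Context: $\mathit{SG}=\wp(\mathit{VI})\setminus\{\emptyset\}$, $\mathit{SH}=\wp(\mathit{SG})$. $\rho_{\mathit{TSD}_k}(sh)=\{\,S\in\mathit{SG}\mid \forall T\subseteq S:\ \#T<k\implies S=\bigcup\{U\in sh\mid T\subseteq U\subseteq S\}\,\}$ is an upper closure operator on $\mathit{SH}$ and $\mathit{TSD}_k=\rho_{\mathit{TSD}_k}(\mathit{SH})$, a complete lattice ordered by inclusion with meet given by intersection and top $\mathit{SG}$. An element $x$ of a complete lattice $C$ is meet-irreducible if for all $y,z\in C$, $x=y\wedge z$ implies $x=y$ or $x=z$; $\mathrm{MI}(C)$ is the set of such elements. A dual-atom is $x\ne\top$ such that $x\le y<\top$ implies $x=y$; $\mathrm{dAtoms}(C)$ is the set of dual-atoms. *)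

(* Defs.v *)
From mathcomp Require Import all_boot all_order.
Set Implicit Arguments. Unset Strict Implicit. Unset Printing Implicit Defensive.

Section TSD.
Variable VI : finType.

Definition SG : {set {set VI}} := [set S : {set VI} | S != set0].

Definition inSH (sh : {set {set VI}}) : bool := sh \subset SG.

Definition rhoTSD (k : nat) (sh : {set {set VI}}) : {set {set VI}} :=
  [set S in SG | [forall T : {set VI},
     ((T \subset S) && (#|T| < k)) ==>
     (S == \bigcup_(U in sh | (T \subset U) && (U \subset S)) U)]].

Definition inTSD (k : nat) (x : {set {set VI}}) : Prop :=
  exists sh, inSH sh /\ x = rhoTSD k sh.

(* meet-irreducible elements of TSD_k (meet in TSD_k is intersection) *)
Definition meet_irreducible (k : nat) (x : {set {set VI}}) : Prop :=
  inTSD k x /\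
  forall y z, inTSD k y -> inTSD k z -> x = y :&: z -> x = y \/ x = z.

Definition dual_atom (k : nat) (x : {set {set VI}}) : Prop :=
  inTSD k x /\ x <> SG /\
  forall y, inTSD k y -> x \subset y -> y <> SG -> x = y.

Definition inMk (k : nat) (x : {set {set VI}}) : Prop :=
  exists T S : {set VI}, [/\ T \in SG, S \in SG, T \proper S, #|T| = k &
    x = SG :\: [set U in SG | (T \subset U) && (U \subset S)]].

End TSD.

(* Main.v *)
Require Import Defs.
From mathcomp Require Import all_boot all_order.
From Stdlib Require Import Classical.
Set Implicit Arguments. Unset Strict Implicit. Unset Printing Implicit Defensive.

Section Proofs.
Variable VI : finType.
Variable k : nat.
Hypothesis k_gt0 : 0 < k.

Local Notation SG := (SG VI).

Definition gen (x : {set {set VI}}) (S : {set VI}) :=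
  forall T : {set VI}, T \subset S -> #|T| < k -> forall b, b \in S ->
    exists2 U, U \in x & [/\ T \subset U, U \subset S & b \in U].

Definition closed (x : {set {set VI}}) :=
  x \subset SG /\ forall S, S \in SG -> gen x S -> S \in x.

Lemma inSG S : (S \in SG) = (S != set0).
Proof. by rewrite inE. Qed.

Lemma rho_gen sh S : S \in rhoTSD k sh <-> S \in SG /\ gen sh S.
Proof.
rewrite inE; split.
  case/andP=> SG_S /forallP H; split=> // T TS Tk b bS.
  move: (H T); rewrite TS Tk /= => /eqP E.
  move: bS; rewrite {1}E => /bigcupP [U /andP[Ush /andP[TU US]] bU].
  by exists U.
case=> SG_S G; rewrite SG_S /=; apply/forallP=> T; apply/implyP=> /andP[TS Tk].
rewrite eqEsubset; apply/andP; split.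
  apply/subsetP=> b bS; have [U Ush [TU US bU]] := G T TS Tk b bS.
  by apply/bigcupP; exists U => //; rewrite Ush TU US.
by apply/bigcupsP=> U /andP[_ /andP[_ ->]].
Qed.

Lemma closed_TSD x : closed x -> inTSD k x.
Proof.
case=> xSG cl; exists x; split=> //; apply/setP=> S; apply/idP/idP.
  move=> Sx; apply/rho_gen; split; first by apply: (subsetP xSG).
  by move=> T TS Tk b bS; exists S.
by case/rho_gen=> SG_S G; apply: cl.
Qed.

Lemma TSD_closed x : inTSD k x -> closed x.
Proof.
case=> sh [shSG ->]; split.
  by apply/subsetP=> S /rho_gen [].
move=> S SG_S G; apply/rho_gen; split=> // T TS Tk b bS.
have [U /rho_gen [_ GU] [TU US bU]] := G T TS Tk b bS.
have [V Vsh [TV VU bV]] := GU T TU Tk b bU.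
by exists V => //; split=> //; apply: subset_trans US.
Qed.

Lemma closedI y z : closed y -> closed z -> closed (y :&: z).
Proof.
case=> ySG cy [zSG cz]; split.
  by apply: subset_trans (subsetIl _ _) ySG.
move=> S SG_S G; rewrite inE; apply/andP; split.
  apply: cy => // T TS Tk b bS; have [U] := G T TS Tk b bS.
  by rewrite inE => /andP[Uy _]; exists U.
apply: cz => // T TS Tk b bS; have [U] := G T TS Tk b bS.
by rewrite inE => /andP[_ Uz]; exists U.
Qed.

Lemma closedSG : closed SG.
Proof. by split. Qed.


Lemma closed_dual S : S \in SG -> #|S| <= k -> closed (SG :\ S).
Proof.
move=> SG_S Sk; split; first exact: subsetDl.
move=> V SG_V G; rewrite !inE -inSG SG_V andbT.
apply/eqP=> EV; subst V.
move: SG_S; rewrite inSG => /set0Pn [a aS].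
have Tk : #|S :\ a| < k.
  by move: Sk; rewrite (cardsD1 a S) aS add1n.
have [U] := G _ (subsetDl S [set a]) Tk a aS.
rewrite !inE => /andP[US _] [TU US' aU].
case/negP: US; apply/eqP/eqP; rewrite eqEsubset US' /=.
by rewrite -(setD1K aS) subUset sub1set aU TU.
Qed.

Definition itv (T S : {set VI}) := [set U in SG | (T \subset U) && (U \subset S)].

Lemma closed_Mk T S : T \in SG -> #|T| = k -> closed (SG :\: itv T S).
Proof.
move=> SG_T Tk; split; first exact: subsetDl.
move=> V SG_V G; rewrite inE SG_V andbT; apply/negP=> Vi.
move: Vi; rewrite inE SG_V /= => /andP[TV VS].
move: SG_T; rewrite inSG => /set0Pn [a aT].
have Tk' : #|T :\ a| < k by rewrite -Tk (cardsD1 a T) aT add1n.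
have aV : a \in V by apply: (subsetP TV).
have [U] := G _ (subset_trans (subsetDl T [set a]) TV) Tk' a aV.
rewrite !inE => /andP[/negP nUi SG_U] [TU UV aU].
apply: nUi; rewrite SG_U /= (subset_trans UV VS) andbT.
by rewrite -(setD1K aT) subUset sub1set aU TU.
Qed.

Lemma extend_set (A C : {set VI}) m :
  A \subset C -> #|A| + m <= #|C| -> exists B : {set VI}, [/\ A \subset B, B \subset C & #|B| = #|A| + m].
Proof.
elim: m A => [|m IH] A AC Am; first by exists A; rewrite addn0.
have lt : #|A| < #|C| by apply: leq_trans Am; rewrite addnS ltnS leq_addr.
have : ~~ (C \subset A).
  by apply/negP=> CA; move: (subset_leq_card CA); rewrite leqNgt lt.
case/subsetPn=> c cC cA.
have AC' : c |: A \subset C by rewrite subUset sub1set cC AC.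
have Am' : #|c |: A| + m <= #|C| by rewrite cardsU1 cA add1n addSnnS.
have [B [AB BC cB]] := IH _ AC' Am'.
exists B; split=> //; last by rewrite cB cardsU1 cA add1n addSnnS.
by apply: subset_trans AB; apply: subsetUr.
Qed.

Definition Cand x := (exists S, [/\ S \in SG, #|S| <= k & x = SG :\ S]) \/ inMk k x.

Lemma cand_exists x V : closed x -> V \in SG -> V \notin x ->
  exists c, [/\ Cand c, closed c, x \subset c & V \notin c].
Proof.
move=> [xSG cx] SG_V Vx.
have xV : forall U, U \in x -> U != V.
  by move=> U Ux; apply/eqP=> E; subst U; rewrite Ux in Vx.
apply: NNPP => nC; case/negP: Vx; apply: cx => //.
move=> T TV Tk b bV; apply: NNPP => nU; apply: nC.
case: (leqP #|V| k) => Vk.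
  exists (SG :\ V); split.
  - by left; exists V.
  - exact: closed_dual.
  - by apply/subsetP=> U Ux; rewrite !inE xV //= -inSG (subsetP xSG).
  - by rewrite !inE eqxx.
have AV : b |: T \subset V by rewrite subUset sub1set bV TV.
have Ak : #|b |: T| <= k by rewrite cardsU1; apply: leq_trans (leq_add (leq_b1 _) (leqnn _)) _; rewrite add1n.
have [B [AB BV cB]] : exists B : {set VI}, [/\ b |: T \subset B, B \subset V & #|B| = #|b |: T| + (k - #|b |: T|)].
  by apply: extend_set AV _; rewrite subnKC // ltnW.
rewrite subnKC // in cB.
have SG_B : B \in SG by rewrite inSG -card_gt0 cB.
exists (SG :\: itv B V); split.
- by right; exists B, V; split=> //; rewrite properEcard BV cB.
- exact: closed_Mk.
- apply/subsetP=> U Ux; have := subsetP xSG U Ux; rewrite inSG => U0.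
  rewrite !inE U0 andbT /=.
  apply/negP=> /andP[BU UV]; apply: nU; exists U => //; split=> //.
    by apply: subset_trans BU; apply: subset_trans AB; apply: subsetUr.
  by apply: (subsetP BU); apply: (subsetP AB); rewrite !inE eqxx.
- by rewrite !inE -inSG SG_V BV subxx.
Qed.


Lemma dual_char x : dual_atom k x <-> exists S, [/\ S \in SG, #|S| <= k & x = SG :\ S].
Proof.
split.
  case=> xT [xne H]; have [xSG cx] := TSD_closed xT.
  apply: NNPP => nE; apply: xne; apply/eqP; rewrite eqEsubset xSG /=.
  apply/subsetP=> V SG_V; apply: cx => // T TV Tk b bV.
  have SGb : b |: T \in SG by rewrite inSG; apply/set0Pn; exists b; rewrite setU11.
  exists (b |: T); last by split; [apply: subsetUr | rewrite subUset sub1set bV TV | apply: setU11].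
  apply: NNPP => nin; apply: nE; exists (b |: T); split=> //.
    by rewrite cardsU1; apply: leq_trans (leq_add (leq_b1 _) (leqnn _)) _; rewrite add1n.
  apply: H.
  - apply: closed_TSD; apply: closed_dual => //.
    by rewrite cardsU1; apply: leq_trans (leq_add (leq_b1 _) (leqnn _)) _; rewrite add1n.
  - apply/subsetP=> U Ux; rewrite in_setD1 (subsetP xSG U Ux) andbT.
    by apply/eqP=> E; subst U; rewrite Ux in nin.
  - by move/setP/(_ (b |: T)); rewrite in_setD1 eqxx SGb.
case=> S [SG_S Sk ->]; split; first by apply: closed_TSD; apply: closed_dual.
split; first by move/setP/(_ S); rewrite in_setD1 eqxx SG_S.
move=> y /TSD_closed [ySG cy] xy yne; apply/eqP; rewrite eqEsubset xy.
apply/subsetP=> U Uy; rewrite in_setD1 (subsetP ySG U Uy) andbT.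
apply/eqP=> E; subst U; apply: yne; apply/eqP; rewrite eqEsubset ySG /=.
apply/subsetP=> V SG_V; case: (eqVneq V S) => [-> //|VS].
by apply: (subsetP xy); rewrite in_setD1 VS SG_V.
Qed.

Lemma irr_of x S : closed x -> S \notin x ->
  (forall y, closed y -> x \subset y -> y <> x -> S \in y) -> meet_irreducible k x.
Proof.
move=> cx Sx H; split; first exact: closed_TSD.
move=> y z /TSD_closed cy /TSD_closed cz E.
have xy : x \subset y by rewrite E subsetIl.
have xz : x \subset z by rewrite E subsetIr.
apply: NNPP => /not_or_and [ny nz].
have Sy := H y cy xy (fun e => ny (esym e)).
have Sz := H z cz xz (fun e => nz (esym e)).
by move: Sx; rewrite E inE Sy Sz.
Qed.

Lemma irr_dual S : S \in SG -> #|S| <= k -> meet_irreducible k (SG :\ S).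
Proof.
move=> SG_S Sk; apply: (irr_of (S := S)); first exact: closed_dual.
  by rewrite !inE eqxx.
move=> y [ySG _] xy yne.
have : ~~ (y \subset SG :\ S) by apply/negP=> yx; apply: yne; apply/eqP; rewrite eqEsubset yx xy.
case/subsetPn=> V Vy; rewrite in_setD1 (subsetP ySG V Vy) andbT negbK => /eqP E.
by rewrite -E.
Qed.

Lemma irr_Mk T S : T \in SG -> S \in SG -> T \proper S -> #|T| = k ->
  meet_irreducible k (SG :\: itv T S).
Proof.
move=> SG_T SG_S TS Tk; have TsS := proper_sub TS.
apply: (irr_of (S := S)); first exact: closed_Mk.
  by rewrite !inE -inSG SG_S TsS subxx.
move=> y [ySG cy] xy yne.
have : ~~ (y \subset SG :\: itv T S) by apply/negP=> yx; apply: yne; apply/eqP; rewrite eqEsubset yx xy.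
case/subsetPn=> V Vy; have SG_V := subsetP ySG V Vy.
rewrite inE SG_V andbT negbK inE SG_V /= => /andP[TV VS].
apply: cy => // T' T'S T'k b bS.
have card1 : #|b |: T'| <= k.
  by rewrite cardsU1; apply: leq_trans (leq_add (leq_b1 _) (leqnn _)) _; rewrite add1n.
case: (boolP (T \subset b |: T')) => TbT.
  have : T == b |: T' by rewrite eqEcard TbT Tk card1.
  move/eqP=> ET; exists V => //; split=> //.
    by apply: subset_trans TV; rewrite ET subsetUr.
  by apply: (subsetP TV); rewrite ET setU11.
exists (b |: T'); last by split; [apply: subsetUr | rewrite subUset sub1set bS T'S | apply: setU11].
apply: (subsetP xy); rewrite in_setD inSG andbC; apply/andP; split; last first.
  by apply/negP; rewrite in_set => /andP[_ /andP[H _]]; rewrite H in TbT.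
by apply/set0Pn; exists b; rewrite !inE eqxx.
Qed.

Lemma irr_cand x : meet_irreducible k x ->
  forall (s : seq {set VI}) w, closed w -> x \subset w ->
  (forall V, V \in w -> V \notin x -> V \in s) -> x = w \/ Cand x.
Proof.
case=> /TSD_closed cx irr; elim=> [|a s IH] w cw xw ws.
  left; apply/eqP; rewrite eqEsubset xw /=; apply/subsetP=> V Vw.
  by apply: NNPP => /negP Vx; move: (ws V Vw Vx).
case: (boolP ((a \in w) && (a \notin x))); last first.
  move=> H; apply: IH => // V Vw Vx; move: (ws V Vw Vx); rewrite inE.
  case/orP=> // /eqP E; subst V; by rewrite Vw Vx in H.
case/andP=> aw ax.
have SG_a : a \in SG by apply: (subsetP cw.1).
have [c [Cc cc xc ac]] := cand_exists cx SG_a ax.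
have xwc : x \subset w :&: c by rewrite subsetI xw xc.
have side : forall V, V \in w :&: c -> V \notin x -> V \in s.
  move=> V; rewrite inE => /andP[Vw Vc] Vx; move: (ws V Vw Vx); rewrite inE.
  by case/orP=> // /eqP E; subst V; rewrite Vc in ac.
have [E|] := IH (w :&: c) (closedI cw cc) xwc side; last by right.
case: (irr w c (closed_TSD cw) (closed_TSD cc) E) => [->|->]; first by left.
by right.
Qed.

End Proofs.

Theorem theorem4p3 (VI : finType) (n k : nat) :
  #|VI| = n -> 1 <= k <= n ->
  (forall x : {set {set VI}},
     meet_irreducible k x <-> x = SG VI \/ dual_atom k x \/ inMk k x) /\
  (forall x : {set {set VI}},
     dual_atom k x <->
     exists S : {set VI}, [/\ S \in SG VI, #|S| <= k & x = SG VI :\ S]).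
Proof.
move=> _ /andP[k0 _].
split; last by move=> x; apply: dual_char.
move=> x; split.
  move=> mi; have := @irr_cand VI k k0 x mi (enum (SG VI)) (SG VI) (closedSG VI k).
  case=> //.
  - by case: mi => /TSD_closed [] //.
  - by move=> V; rewrite mem_enum.
  - by left.
  case=> [[S H]|H]; right; [left; apply/dual_char => //; by exists S | by right].
case=> [->|[/(proj1 (@dual_char VI k x)) [S [SG_S Sk ->]]|[T [S [SG_T SG_S TS Tk ->]]]]].
- split; first exact: closed_TSD (closedSG VI k).
  move=> y z /TSD_closed [ySG _] /TSD_closed [zSG _] E; left.
  apply/eqP; rewrite eqEsubset ySG andbT E; exact: subsetIl.
- exact: irr_dual.
- exact: irr_Mk.
Qed.
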